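(* Let $\pi\in\mathfrak{S}_n$ have disjoint cycles of lengths $\ell_1,\dots,\ell_m$ (fixed points included). In $\textsf{Star}(n)$, the number of elements covered by $\pi$ is $\sum_{1\le i<j\le m}\ell_i\ell_j$, and the number of elements covering $\pi$ is $\sum_{i=1}^m\binom{\ell_i}{2}$.
   Context: $\mathfrak{S}_n$ is the symmetric group on $[n]$, products taken right to left. For a pivot $k\in[n]$, a star factorization of $\pi$ is $\pi=g_1\cdots g_r$ with each $g_i$ a transposition $(k\ i)$, $i\neq k$; it is transitive if all $(k\ i)$, $i\in[n]\setminus\{k\}$, occur; $\star_k(\pi)$ is the set of transitive star factorizations of $\pi$ of minimum length $n+m-2$ ($m$ = number of cycles of $\pi$). $\sigma\preceq_k\pi$ means some $\gamma\in\star_k(\sigma)$ is a not necessarily contiguous subword of some $\delta\in\star_k(\pi)$. This relation does not depend on $k$; it is denoted $\preceq$, and $\textsf{Star}(n)$ is the resulting poset on $\mathfrak{S}_n$. $\tau$ covers $\sigma$ if $\sigma\preceq\tau$, $\sigma\neq\tau$, and there is no $\rho\notin\{\sigma,\tau\}$ with $\sigma\preceq\rho\preceq\tau$. *)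

(* Defs.v *)
From mathcomp Require Import all_boot all_fingroup.
From mathcomp Require Import boolp.

Set Implicit Arguments.
Unset Strict Implicit.
Unset Printing Implicit Defensive.

Local Open Scope group_scope.

(* A word w = [:: i_1; ...; i_r] over 'I_n encodes the product
   g_1 g_2 ... g_r of the transpositions g_j = (k i_j), products taken
   right to left (g_r is applied first).  In mathcomp, (p * q) x = q (p x),
   so g_1 \circ ... \circ g_r is g_r * ... * g_1. *)
Fixpoint star_prod (n : nat) (k : 'I_n) (w : seq 'I_n) : 'S_n :=
  match w with
  | [::] => 1
  | i :: w' => star_prod k w' * tperm k i
  end.

Definition ncycles (n : nat) (pi : 'S_n) : nat := #|porbits pi|.

Definition star_fact (n : nat) (k : 'I_n) (pi : 'S_n) (w : seq 'I_n) : Prop :=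
  all (fun i => i != k) w /\ star_prod k w = pi.

Definition transitive_star (n : nat) (k : 'I_n) (w : seq 'I_n) : Prop :=
  forall i : 'I_n, i != k -> i \in w.

Definition in_star (n : nat) (k : 'I_n) (pi : 'S_n) (w : seq 'I_n) : Prop :=
  [/\ star_fact k pi w, transitive_star k w & size w = n + ncycles pi - 2].

Definition star_le (n : nat) (k : 'I_n) (sigma pi : 'S_n) : Prop :=
  exists g d : seq 'I_n, [/\ in_star k sigma g, in_star k pi d & subseq g d].

Definition star_covers (n : nat) (k : 'I_n) (tau sigma : 'S_n) : Prop :=
  [/\ star_le k sigma tau, sigma <> tau &
      ~ exists rho : 'S_n, [/\ rho <> sigma, rho <> tau,
                               star_le k sigma rho & star_le k rho tau]].

Definition cycle_lengths (n : nat) (pi : 'S_n) : seq nat :=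
  map (fun c : {set 'I_n} => #|c|) (enum (porbits pi)).

(* Main.v *)
Require Import Defs.
From mathcomp Require Import all_boot all_fingroup.
From mathcomp Require Import boolp.
From mathcomp Require Import zify.

Set Implicit Arguments.
Unset Strict Implicit.
Unset Printing Implicit Defensive.
Local Open Scope group_scope.

Section Words.
Variables (n : nat) (k : 'I_n).
Local Notation P := (star_prod k).
Local Notation m := (@ncycles n).

Lemma P_cat u v : P (u ++ v) = P v * P u.
Proof. by elim: u => [|i u IH] /=; [rewrite mulg1 | rewrite IH mulgA]. Qed.

Lemma P_notin w z : z != k -> z \notin w -> P w z = z.
Proof.
elim: w => [|b w IH] /= zk; first by rewrite perm1.
rewrite inE negb_or => /andP[zb zw].
by rewrite permM IH // tpermD // eq_sym.
Qed.

Lemma P_uniq_in w z : uniq w -> all (fun i => i != k) w -> z \in w -> P w z != z.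
Proof.
elim: w => [|b w IH] //= /andP[bw uw] /andP[bk ak].
rewrite inE permM; case: (eqVneq z b) => [-> _ | zb /= zw].
  by rewrite P_notin // tpermR eq_sym.
have zk : z != k by move/allP: ak => /(_ z zw).
have := IH uw ak zw; set y := P w z => yz.
by case: tpermP => [_|_|//]; rewrite ?(eq_sym k) // eq_sym.
Qed.

Lemma suffix_k w x : (x == k) || (x \in w) ->
  exists u v, w = u ++ v /\ P v x = k.
Proof.
elim: w => [|b w IH] /=.
  by rewrite orbF => /eqP ->; exists [::], [::]; rewrite perm1.
case: (boolP ((x == k) || (x \in w))) => [H _ | H Hx].
  by have [u [v [-> Hv]]] := IH H; exists (b :: u), v.
exists [::], (b :: w); split => //=.
move: H Hx; rewrite inE negb_or => /andP[xk xw]; rewrite (negPf xk) /=.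
case/orP => [/eqP Exb|]; last by rewrite (negPf xw).
by rewrite permM P_notin -?Exb // tpermR.
Qed.

Lemma ins w x y : x != y -> (x == k) || (x \in w) ->
  exists u a v, [/\ w = u ++ v, a != k & P (u ++ a :: v) = tperm x y * P w].
Proof.
move=> xy Hx; have [u [v [-> Hv]]] := suffix_k Hx.
exists u, (P v y), v; split => //.
  by apply/eqP => E; move/eqP: xy; apply; apply: (@perm_inj _ (P v)); rewrite E Hv.
have E : tperm k (P v y) = tperm x y ^ P v by rewrite tpermJ Hv.
rewrite !P_cat /=.
rewrite E conjgE !mulgA mulgV mul1g.
by rewrite -!mulgA.
Qed.

Lemma del u a v : a != k -> exists x y,
  x != y /\ P (u ++ v) = tperm x y * P (u ++ a :: v).
Proof.
move=> ak; exists ((P v)^-1 k), ((P v)^-1 a); split.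
  by rewrite (inj_eq perm_inj) eq_sym.
have E : tperm ((P v)^-1 k) ((P v)^-1 a) = tperm k a ^ (P v)^-1 by rewrite tpermJ.
rewrite !P_cat /= E conjgE invgK !mulgA.
rewrite -(mulgA _ (P v)^-1) mulVg mulg1.
by rewrite -(mulgA (P v) (tperm k a)) tperm2 mulg1.
Qed.

End Words.

Section Cyc.
Variables (n : nat) (k : 'I_n).
Local Notation P := (star_prod k).
Local Notation m := (@ncycles n).

Lemma mtp (s : 'S_n) x y : x != y ->
  m (tperm x y * s) + (x \notin porbit s y).*2 = m s + 1.
Proof. by move=> xy; rewrite /ncycles porbits_mul_tperm xy. Qed.

Lemma n_gt0 : 0 < n.
Proof. by case: n k => [[]|]. Qed.

Lemma m_gt0 (s : 'S_n) : 0 < m s.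
Proof.
rewrite /ncycles card_gt0; apply/set0Pn; exists (porbit s k).
by apply: imset_f.
Qed.

Lemma subseq_del (g d : seq 'I_n) : subseq g d -> size g < size d ->
  exists u a v, d = u ++ a :: v /\ subseq g (u ++ v).
Proof.
elim: d g => [|b d IH] [|c g] //=.
  by move=> _ _; exists [::], b, d; rewrite sub0seq.
case: eqP => [-> | neq] Hs Hsz.
  have [u [a [v [-> H]]]] := IH g Hs Hsz.
  by exists (b :: u), a, v; rewrite /= eqxx.
by exists [::], b, d.
Qed.

Lemma m_subseq N (d g : seq 'I_n) : size d < N -> subseq g d ->
  all (fun i => i != k) d -> m (P d) + size g <= m (P g) + size d.
Proof.
elim: N d g => // N IH d g Hsz Hs Ha.
case: (ltnP (size g) (size d)) => Hlt.
  have [u [a [v [Ed Hs']]]] := subseq_del Hs Hlt; subst d.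
  move: Ha; rewrite all_cat /= => /and3P[Hu Hak Hv].
  have Ha' : all (fun i => i != k) (u ++ v) by rewrite all_cat Hu.
  have Hsz' : size (u ++ v) < N by move: Hsz; rewrite !size_cat /=; lia.
  have := IH _ _ Hsz' Hs' Ha'.
  have [x [y [xy E]]] := del u v Hak.
  have := mtp (P (u ++ a :: v)) xy; rewrite -E !size_cat /=.
  case: (x \notin _) => /=; lia.
have : g == d by rewrite -(size_subseq_leqif Hs).2 eqn_leq Hlt size_subseq.
by move/eqP ->.
Qed.

Lemma le_grade (s r : 'S_n) : star_le k s r -> m s <= m r /\ (m s = m r -> s = r).
Proof.
case=> g [d [[[_ Pg] _ Sg] [[_ Pd] _ Sd] gd]].
have := size_subseq gd; rewrite Sg Sd => H.
have := n_gt0; have := m_gt0 s; have := m_gt0 r => h1 h2 h3.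
split; first by lia.
move=> E; have : g == d.
  by rewrite -(size_subseq_leqif gd).2 Sg Sd E.
by move/eqP => Egd; rewrite -Pg -Pd Egd.
Qed.

End Cyc.

Section Exist.
Variables (n : nat) (k : 'I_n).
Local Notation P := (star_prod k).
Local Notation m := (@ncycles n).

Lemma fixed_orbit (s : 'S_n) x y : s x = x -> y \in porbit s x -> y = x.
Proof.
move=> sx /porbitP[i ->]; elim: i => [|i IH]; first by rewrite expg0 perm1.
by rewrite expgSr permM IH sx.
Qed.

Lemma base j : forall s : 'S_n, #|[set z | (z != k) && (s z != z)]| = j ->
  m s = n - j -> exists w, [/\ uniq w, all (fun i => i != k) w & P w = s].
Proof.
elim: j => [|j IH] s.
  move/eqP; rewrite cards_eq0 => /eqP H0 _.
  have Hf z : z != k -> s z = z.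
    move=> zk; apply/eqP; apply: contraT => szz.
    have : z \in [set z | (z != k) && (s z != z)] by rewrite inE zk szz.
    by rewrite H0 inE.
  have sk : s k = k.
    case: (eqVneq (s k) k) => // ne; apply: perm_inj; exact: Hf.
  exists [::]; split => //=; apply/permP => z; rewrite perm1.
  by case: (eqVneq z k) => [->|/Hf ->].
move=> Hc Hm.
have sk : s k != k.
  apply/negP => /eqP sk.
  set NF := [set z | (z != k) && (s z != z)] in Hc.
  set F := [set z | s z == z].
  have HF : F = ~: NF.
    apply/setP => z; rewrite !inE negb_and !negbK.
    by case: (eqVneq z k) => [->|] /=; rewrite ?sk ?eqxx.
  have [z0 Hz0] : exists z0, z0 \in NF by apply/set0Pn; rewrite -card_gt0 Hc.
  have Hinj : {in z0 |: F &, injective (porbit s)}.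
    move=> x y; rewrite !inE => Hx Hy E.
    case/orP: Hx => [/eqP Ex|/eqP sx].
      subst x; case/orP: Hy => [/eqP -> //|/eqP sy].
      by apply: (fixed_orbit sy); rewrite -E porbit_id.
    by apply: esym; apply: (fixed_orbit sx); rewrite E porbit_id.
  have : #|porbit s @: (z0 |: F)| <= m s.
    by apply: subset_leq_card; apply/subsetP => c /imsetP[x _ ->]; apply: imset_f.
  rewrite card_in_imset // cardsU1 HF cardsCs card_ord inE Hz0 Hm /= setCK Hc.
  have := m_gt0 k s; rewrite Hm; lia.
set a := s^-1 k.
have sa : s a = k by rewrite permKV.
have ak : a != k by apply: contra sk => /eqP E; rewrite -[X in s X]E sa.
set s' := s * tperm k a.
have Hm' : m s' = n - j.
  have E1 : m s' = m (tperm k a * s^-1).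
    by rewrite /ncycles -porbitsV /s' invMg tpermV.
  have E2 : m s^-1 = m s by rewrite /ncycles porbitsV.
  have ka : k != a by rewrite eq_sym.
  have Hk : k \in porbit s^-1 a.
    by rewrite porbitV; have := mem_porbit s 1 a; rewrite expg1 sa.
  have := mtp (s^-1) ka; rewrite Hk /= -E1 E2 => H1.
  have := m_gt0 k s; lia.
have HNF : [set z | (z != k) && (s' z != z)] = [set z | (z != k) && (s z != z)] :\ a.
  apply/setP => z; rewrite !inE /s' permM.
  case: tpermP => [Ek|Ea|szk sza].
  - have -> : z = a by apply: (@perm_inj _ s); rewrite Ek sa.
    by rewrite eqxx andbF.
  - have za : z != a by apply/negP => /eqP E; move: Ea; rewrite E sa => /eqP; rewrite eq_sym (negPf ak).
    by rewrite za Ea !(eq_sym _ z) za; case: (z != k).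
  - have -> // : z != a by apply/eqP => E; apply: szk; rewrite E sa.
have Hc' : #|[set z | (z != k) && (s' z != z)]| = j.
  move: Hc; rewrite HNF (cardsD1 a) [a \in _]inE ak sa eq_sym ak /=.
  by move=> [].
have [w' [uw aw Pw]] := IH s' Hc' Hm'.
have aw' : a \notin w'.
  apply/negP => Ha; have := P_uniq_in uw aw Ha.
  by rewrite Pw /s' permM sa tpermL eqxx.
exists (a :: w'); split => /=; first by rewrite aw' uw.
  by rewrite ak aw.
by rewrite Pw /s' -mulgA tperm2 mulg1.
Qed.

End Exist.

Section Exist2.
Variables (n : nat) (k : 'I_n).
Local Notation P := (star_prod k).
Local Notation m := (@ncycles n).

Lemma exists_m1 (s : 'S_n) : m s = 1%N -> exists w, in_star k s w.
Proof.
move=> H.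
have Hnf z : z != k -> s z != z.
  move=> zk; apply/negP => /eqP sz.
  have : (1 < m s)%N.
    apply/card_gt1P; exists (porbit s z), (porbit s k); split; try exact: imset_f.
    rewrite eq_porbit_mem porbit_sym; apply/negP => /(fixed_orbit sz) E.
    by rewrite E eqxx in zk.
  by rewrite H.
have HNF : [set z | (z != k) && (s z != z)] = [set~ k].
  apply/setP => z; rewrite !inE; case: (eqVneq z k) => //= zk; exact: Hnf zk.
have n0 := n_gt0 k.
have Hc : #|[set z | (z != k) && (s z != z)]| = n.-1 by rewrite HNF cardsC1 card_ord.
have Hm : m s = n - n.-1 by rewrite H; lia.
have [w [uw aw Pw]] := base Hc Hm.
have Hmem z : (z \in w) = (z != k).
  apply/idP/idP; first by move/allP: aw => /(_ z).
  move=> zk; apply: contraT => zw; have := P_notin zk zw; rewrite Pw => /eqP.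
  by rewrite (negPf (Hnf z zk)).
exists w; split; [by split | by move=> z; rewrite Hmem |].
have : #|w| = #|[set~ k]|.
  by apply: eq_card => z; rewrite in_setC1; apply: Hmem.
rewrite cardsC1 card_ord (card_uniqP uw) H => ->; lia.
Qed.

Lemma ins_star (s : 'S_n) x y g : in_star k s g -> x \in porbit s y -> x != y ->
  exists d, in_star k (tperm x y * s) d /\ subseq g d.
Proof.
case=> [[ag Pg] tg sg] xs xy.
have Hx : (x == k) || (x \in g) by case: (eqVneq x k) => //= /tg.
have [u [a [v [Eg ak Pd]]]] := ins xy Hx.
exists (u ++ a :: v); split; last first.
  by rewrite Eg; apply: cat_subseq (subseq_refl u) (subseq_cons v a).
split.
- split; last by rewrite Pd Pg.
  by move: ag; rewrite Eg !all_cat /= ak.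
- by move=> i /tg; rewrite Eg !mem_cat inE => /orP[]->; rewrite ?orbT.
- have := mtp s xy; rewrite xs /=.
  move: sg; rewrite Eg !size_cat /=.
  have := n_gt0 k; have := m_gt0 k s; rewrite /ncycles; lia.
Qed.

Lemma merge_split (s : 'S_n) x y : x \notin porbit s y ->
  x \in porbit (tperm x y * s) y.
Proof.
move=> H; have xy : x != y by apply: contra H => /eqP ->; exact: porbit_id.
have := mtp s xy; have := mtp (tperm x y * s) xy; rewrite tpermKg H /=.
case: (x \in porbit _ y) => //=; lia.
Qed.

Lemma split_merge (s : 'S_n) x y : x \in porbit s y -> x != y ->
  x \notin porbit (tperm x y * s) y.
Proof.
move=> H xy.
have := mtp s xy; have := mtp (tperm x y * s) xy; rewrite tpermKg H /=.
case: (x \in porbit _ y) => //=; lia.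
Qed.

Lemma exists_star N (s : 'S_n) : m s < N -> exists w, in_star k s w.
Proof.
elim: N s => // N IH s Hs.
case: (eqVneq (m s) 1%N) => [/exists_m1 //| m1].
have : (1 < m s)%N by have := m_gt0 k s; lia.
case/card_gt1P => c1 [c2 [/imsetP[x _ ->] /imsetP[y _ ->] neq]].
have H : x \notin porbit s y by rewrite -eq_porbit_mem.
have xy : x != y by apply: contra H => /eqP ->; exact: porbit_id.
have Hm : m (tperm x y * s) < N by have := mtp s xy; rewrite H /=; lia.
have [g Hg] := IH _ Hm.
have [d [Hd _]] := ins_star Hg (merge_split H) xy.
by exists d; rewrite tpermKg in Hd.
Qed.

Lemma covers_iff (t s : 'S_n) : star_covers k t s <->
  exists x y, s = tperm x y * t /\ x \notin porbit t y.
Proof.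
split.
- case=> [[g [d [Hg Hd gd]]] st Hno].
  have [[[ag Pg] tg sg] [[ad Pd] td sd]] := (Hg, Hd).
  have n0 := n_gt0 k; have ms := m_gt0 k s; have mt := m_gt0 k t.
  have Hsz := size_subseq gd.
  case: (ltnP (size g) (size d)) => Hlt; last first.
    have : g == d by rewrite -(size_subseq_leqif gd).2 eqn_leq Hlt Hsz.
    by move/eqP => E; case: st; rewrite -Pg -Pd E.
  have [u [a [v [Ed Hs']]]] := subseq_del gd Hlt.
  move: ad; rewrite Ed all_cat /= => /and3P[Hu Hak Hv].
  have [x [y [xy E]]] := del u v Hak.
  case: (ltnP (size g) (size (u ++ v))) => Hlt2.
    exfalso; apply: Hno; exists (P (u ++ v)).
    have Ha' : all (fun i => i != k) (u ++ v) by rewrite all_cat Hu.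
    have H1 := mtp (P (u ++ a :: v)) xy; rewrite -E -Ed Pd in H1.
    have H2 := m_subseq (ltnSn _) Hs' Ha'.
    rewrite Pg in H2.
    have Hsd : size d = (size (u ++ v)).+1 by rewrite Ed !size_cat /= addnS.
    have mr := m_gt0 k (P (u ++ v)).
    have Emr : m (P (u ++ v)) + 1 = m t.
      move: H1; case: (x \notin _) => /= H1; rewrite /ncycles in sg sd H1 H2 ms mt mr *; lia.
    have Hw : in_star k (P (u ++ v)) (u ++ v).
      split => //.
      + by move=> i /tg; apply: (mem_subseq Hs').
      + rewrite /ncycles in sd Emr mr *; lia.
    split.
    + move=> E'; move: Emr; rewrite E'; rewrite /ncycles in sg sd ms mt *; lia.
    + move=> E'; move: Emr; rewrite E'; lia.
    + by exists g, (u ++ v).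
    + by exists (u ++ v), d; split => //; rewrite Ed; apply: cat_subseq (subseq_refl u) (subseq_cons v a).
  have Egv : g = u ++ v.
    by apply/eqP; rewrite -(size_subseq_leqif Hs').2 eqn_leq (size_subseq Hs') Hlt2.
  have Es : s = tperm x y * t by rewrite -Pg Egv E -Ed Pd.
  exists x, y; split => //.
  have H1 := mtp t xy; rewrite -Es in H1.
  move: H1 sg sd; rewrite Egv Ed !size_cat /=; case: (x \notin _) => //=.
  rewrite /ncycles in ms mt *; lia.
- case=> x [y [-> H]].
  have xy : x != y by apply: contra H => /eqP ->; exact: porbit_id.
  have [g Hg] := exists_star (ltnSn (m (tperm x y * t))).
  have [d [Hd gd]] := ins_star Hg (merge_split H) xy.
  rewrite tpermKg in Hd.
  have H1 := mtp t xy; rewrite H /= in H1.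
  split.
  + by exists g, d.
  + by move=> E; move: H1; rewrite E; lia.
  + case=> r [r1 r2 l1 l2].
    have [a1 a2] := le_grade l1; have [b1 b2] := le_grade l2.
    case: (ltngtP (m r) (m t)) => c.
    * by apply: r1; apply: esym; apply: a2; lia.
    * lia.
    * exact: r2 (b2 c).
Qed.

End Exist2.

Section Count.
Variable n : nat.
Local Notation T := 'I_n.

Lemma tperm_ord_inj (x1 y1 x2 y2 : T) : (x1 < y1)%N -> (x2 < y2)%N ->
  tperm x1 y1 = tperm x2 y2 -> x1 = x2 /\ y1 = y2.
Proof.
move=> l1 l2 E.
have H1 : tperm x2 y2 x1 = y1 by rewrite -E tpermL.
have ex : x1 = x2.
  move: H1; case: tpermP => [// | e1 e2 | n1 n2 e].
  - by move: l1 l2; rewrite e1 -e2; lia.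
  - by move: l1; rewrite e ltnn.
subst x2; split => //.
by rewrite -(tpermL x1 y1) E tpermL.
Qed.

Lemma count_tperm (R : rel T) (s : 'S_n) : symmetric R -> irreflexive R ->
  (#|[set tperm p.1 p.2 * s | p in [set p : T * T | R p.1 p.2]]|).*2
  = \sum_(x : T) #|[set y | R x y]|.
Proof.
move=> Rs Ri.
set f := fun p : T * T => tperm p.1 p.2 * s.
set A := [set p : T * T | R p.1 p.2].
set B := [set p : T * T | R p.1 p.2 && (p.1 < p.2)%N].
have fAB : f @: A = f @: B.
  apply/eqP; rewrite eqEsubset; apply/andP; split; last first.
    by apply: imsetS; apply/subsetP => p; rewrite !inE => /andP[].
  apply/subsetP => _ /imsetP[[x y] Hp ->]; move: Hp; rewrite inE /= => Rxy.
  case: (ltngtP x y) => c.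
  - by apply: imset_f; rewrite inE /= Rxy ?c.
  - apply/imsetP; exists (y, x); first by rewrite inE /= Rs Rxy ?c.
    by rewrite /f /= tpermC.
  - by move/val_inj: c => E; rewrite E Ri in Rxy.
have cB : #|f @: B| = #|B|.
  apply: card_in_imset => [[x1 y1] [x2 y2]]; rewrite !inE /=.
  move=> /andP[_ l1] /andP[_ l2] /mulIg E.
  by have [-> ->] := tperm_ord_inj l1 l2 E.
have cA : #|A| = (#|B|).*2.
  set sw := fun p : T * T => (p.2, p.1).
  have swi : injective sw by move=> [? ?] [? ?] [-> ->].
  have AU : A = B :|: sw @: B.
    apply/setP => [[x y]]; rewrite !inE /=; apply/idP/orP.
    - move=> Rxy; case: (ltngtP x y) => c.
      + by left; rewrite Rxy.
      + right; apply/imsetP; exists (y, x); last by [].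
        by rewrite inE /= Rs Rxy ?c.
      + by move/val_inj: c => E; rewrite E Ri in Rxy.
    - case => [/andP[] // | /imsetP[[a b]]].
      by rewrite inE /= => /andP[Rab _] [-> ->]; rewrite Rs.
  have I0 : B :&: sw @: B = set0.
    apply/setP => [[x y]]; rewrite !inE /=; apply/negP.
    move=> /andP[/andP[_ c] /imsetP[[a b]]]; rewrite inE /= => /andP[_ c'] [ex ey].
    by subst; lia.
  by rewrite AU cardsU card_imset // I0 cards0 subn0 addnn.
rewrite fAB cB -cA -sum1_card.
rewrite (eq_bigr (fun x => \sum_(y | R x y) 1)); last first.
  by move=> x _; rewrite sum1dep_card.
by rewrite pair_big_dep; apply: eq_bigl => p; rewrite inE.
Qed.

Lemma sum_porbit (s : 'S_n) (F : nat -> nat) :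
  \sum_(c in porbits s) F #|c| * #|c| = \sum_(x : T) F #|porbit s x|.
Proof.
rewrite [RHS](partition_big_imset (porbit s)) /=.
apply: eq_bigr => _ /imsetP[z _ ->].
rewrite (eq_bigr (fun _ => F #|porbit s z|)); last by move=> i /eqP ->.
rewrite (eq_bigl (mem (porbit s z))); last by move=> i; rewrite eq_porbit_mem.
by rewrite sum_nat_const mulnC.
Qed.

Lemma sum_len (s : 'S_n) (G : nat -> nat) :
  \sum_(i < size (cycle_lengths s)) G (nth 0 (cycle_lengths s) i)
  = \sum_(c in porbits s) G #|c|.
Proof.
rewrite -(big_mkord xpredT (fun i => G (nth 0 (cycle_lengths s) i))).
by rewrite -(big_nth 0 xpredT G) big_map big_enum.
Qed.

End Count.

Section Arith.
Local Open Scope nat_scope.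

Lemma sq_id (a : nat -> nat) M : (\sum_(i < M) a i) ^ 2 =
  \sum_(i < M) a i ^ 2 + 2 * \sum_(i < M) \sum_(j < M | (i < j)%N) a i * a j.
Proof.
elim: M => [|M IH]; first by rewrite !big_ord0.
have E1 : \sum_(i < M.+1) \sum_(j < M.+1 | (i < j)%N) a i * a j =
   \sum_(i < M) \sum_(j < M | (i < j)%N) a i * a j + (\sum_(i < M) a i) * a M.
  rewrite big_ord_recr /=.
  rewrite [X in _ + X = _]big_pred0 ?addn0; last first.
    by move=> j; rewrite ltnNge -ltnS ltn_ord.
  rewrite big_distrl -big_split; apply: eq_bigr => i _ /=.
  by rewrite big_mkcond big_ord_recr /= ltn_ord -big_mkcond.
rewrite E1 !big_ord_recr /= sqrnD IH mulnDr !addnA; congr (_ + _).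
rewrite -!addnA; congr (_ + _).
move: (a M ^ 2) (\sum_(i < M) \sum_(j < M | i < j) a i * a j) ((\sum_(i < M) a i) * a M).
move=> x y z; lia.
Qed.

Lemma bin2_id l : 2 * 'C(l, 2) + l = l ^ 2.
Proof.
elim: l => [//|l IH]; rewrite binS bin1; move: IH; lia.
Qed.

End Arith.

Unset Implicit Arguments.
Set Strict Implicit.

Theorem mainTheorem13 (n : nat) (k : 'I_n) (pi : 'S_n) :
  let l := cycle_lengths pi in
  let m := size l in
  #|[set sigma : 'S_n | `[< star_covers k pi sigma >]]|
    = (\sum_(i < m) \sum_(j < m | (i < j)%N) nth 0 l i * nth 0 l j)%N
  /\
  #|[set tau : 'S_n | `[< star_covers k tau pi >]]|
    = (\sum_(i < m) 'C(nth 0 l i, 2))%N.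
Proof.
move=> l M; subst l M.
set l := cycle_lengths pi.
set Q := (\sum_(x : 'I_n) #|porbit pi x|)%N.
have SL : (\sum_(i < size l) nth 0 l i)%N = n.
  rewrite (sum_len pi id) /=.
  have Hn : (\sum_(x : 'I_n) 1 = n)%N by rewrite sum_nat_const card_ord muln1.
  have := sum_porbit pi (fun _ => 1%N); rewrite Hn => H; apply: etrans H.
  by apply: eq_bigr => c _; rewrite mul1n.
have SQ : (\sum_(i < size l) (nth 0 l i) ^ 2)%N = Q.
  rewrite (sum_len pi (fun x => x ^ 2)%N) /=; apply: etrans (sum_porbit pi id).
  by apply: eq_bigr => c _; rewrite mulnn.
have Sq := sq_id (fun i => nth 0 l i) (size l).
rewrite SL SQ in Sq.
have Hn : (\sum_(x : 'I_n) 1 = n)%N by rewrite sum_nat_const card_ord muln1.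
have Hnn : (\sum_(x : 'I_n) n = n * n)%N by rewrite sum_nat_const card_ord.
have cle x : (#|porbit pi x| <= n)%N := leq_trans (max_card _) (eq_leq (card_ord n)).
have cge x : (0 < #|porbit pi x|)%N.
  by rewrite card_gt0; apply/set0Pn; exists x; apply: porbit_id.
split.
- have -> : [set sigma : 'S_n | `[< star_covers k pi sigma >]] =
     [set tperm p.1 p.2 * pi | p in [set p : 'I_n * 'I_n | p.1 \notin porbit pi p.2]].
    apply/setP => s; rewrite inE; apply/asboolP/imsetP.
    + by move/covers_iff => [x [y [-> H]]]; exists (x, y); rewrite ?inE.
    + by case=> [[x y]]; rewrite inE /= => H ->; apply/covers_iff; exists x, y.
  have C := count_tperm (R := fun x y => x \notin porbit pi y) pi.
  have /C {C} : symmetric (fun x y => x \notin porbit pi y).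
    by move=> x y; rewrite porbit_sym.
  have /[swap]/[apply] : irreflexive (fun x y => x \notin porbit pi y).
    by move=> x; rewrite porbit_id.
  rewrite (eq_bigr (fun x => n - #|porbit pi x|)%N); last first.
    move=> x _; have E := etrans (cardsC (porbit pi x)) (card_ord n).
    have -> : #|[set y | x \notin porbit pi y]| = #|~: porbit pi x|.
      by apply: eq_card => y; rewrite !inE porbit_sym.
    move: E; move: (#|~: porbit pi x|) (#|porbit pi x|) => a b; lia.
  have E2 : (\sum_(x : 'I_n) (n - #|porbit pi x|) + Q = n * n)%N.
    rewrite /Q -big_split /= -Hnn.
    by apply: eq_bigr => x _; rewrite subnK.
  move: E2 Sq; rewrite mulnn.
  move: (\sum_(x : 'I_n) (n - #|porbit pi x|))%N => X.
  move=> E2 Sq E1; lia.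
- have -> : [set tau : 'S_n | `[< star_covers k tau pi >]] =
     [set tperm p.1 p.2 * pi | p in [set p : 'I_n * 'I_n | (p.1 \in porbit pi p.2) && (p.1 != p.2)]].
    apply/setP => t; rewrite inE; apply/asboolP/imsetP.
    + move/covers_iff => [x [y [E H]]]; exists (x, y); last by rewrite E tpermKg.
      rewrite inE /= (_ : pi = tperm x y * t) ?merge_split //.
      by apply: contra H => /eqP ->; exact: porbit_id.
    + case=> [[x y]]; rewrite inE /= => /andP[H xy] ->; apply/covers_iff.
      exists x, y; rewrite tpermKg; split => //; exact: split_merge.
  have C := count_tperm (R := fun x y => (x \in porbit pi y) && (x != y)) pi.
  have /C {C} : symmetric (fun x y => (x \in porbit pi y) && (x != y)).
    by move=> x y; rewrite porbit_sym eq_sym.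
  have /[swap]/[apply] : irreflexive (fun x y => (x \in porbit pi y) && (x != y)).
    by move=> x; rewrite eqxx andbF.
  rewrite (eq_bigr (fun x => #|porbit pi x| - 1)%N); last first.
    move=> x _; rewrite (cardsD1 x (porbit pi x)) porbit_id add1n subSS subn0.
    by apply: eq_card => y; rewrite !inE porbit_sym andbC eq_sym.
  have E2 : (\sum_(x : 'I_n) (#|porbit pi x| - 1) + n = Q)%N.
    rewrite /Q.
    have -> : (\sum_(x : 'I_n) (#|porbit pi x| - 1) + n =
       \sum_(x : 'I_n) (#|porbit pi x| - 1) + \sum_(x : 'I_n) 1)%N by rewrite Hn.
    rewrite -big_split /=.
    by apply: eq_bigr => x _; rewrite subnK.
  have Eb : (2 * \sum_(i < size l) 'C(nth 0 l i, 2) + n = Q)%N.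
    rewrite -SQ -SL big_distrr -big_split /=.
    by apply: eq_bigr => i _; rewrite bin2_id.
  move: E2 Eb.
  move: (\sum_(x : 'I_n) (#|porbit pi x| - 1))%N => X.
  move=> E2 Eb E1; lia.
Qed.
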